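(* Let $X$ be a random variable taking values in a set $\mathcal{X}$, $Y \in [0,1]$ a target outcome and $\hat{Y} \in [0,1]$ an expert prediction, all jointly distributed. Let $\mathcal{F}^{\text{binary}}$ be a class of functions $\mathcal{X} \to \{0,1\}$, let $\alpha \ge 0$, and let $S_1, \dots, S_K$ be an $\alpha$-multicalibrated partition with respect to $\mathcal{F}^{\text{binary}}$ and $Y$. Suppose that for every $k \in [K]$ there exists $\tilde{f}_k \in \mathcal{F}^{\text{binary}}$ such that $Y$ and $\hat{Y}$ are conditionally independent given $\tilde{f}_k(X)$ and the event $X \in S_k$. Then for all $k \in [K]$, $$\left|\mathrm{Cov}_k(Y, \hat{Y})\right| \le \sqrt{\frac{\alpha}{2}}.$$
   Context: $\mathrm{Cov}_k$ denotes covariance conditional on $\{X \in S_k\}$ (assumed to have positive probability). A set $S \subseteq \mathcal{X}$ is $\alpha$-indistinguishable with respect to a function class $\mathcal{F}$ and target $Y$ if $|\mathrm{Cov}(f(X), Y \mid X \in S)| \le \alpha$ for all $f \in \mathcal{F}$. Sets $S_1, \dots, S_K$ form an $\alpha$-multicalibrated partition with respect to $\mathcal{F}$ and $Y$ if they partition $\mathcal{X}$ and each $S_k$ is $\alpha$-indistinguishable with respect to $\mathcal{F}$ and $Y$. *)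

(* Defs.v *)
From HB Require Import structures.
From mathcomp Require Import all_boot all_order all_algebra.
From mathcomp Require Import all_classical all_reals all_analysis.
Set Implicit Arguments. Unset Strict Implicit. Unset Printing Implicit Defensive.
Import Order.TTheory GRing.Theory Num.Theory.
Local Open Scope classical_set_scope.
Local Open Scope ring_scope.

Definition cond_expect {d} {Omega : measurableType d} {R : realType}
  (P : probability Omega R) (E : set Omega) (Z : Omega -> R) : R :=
  Rintegral P E Z / fine (P E).

Definition cond_cov {d} {Omega : measurableType d} {R : realType}
  (P : probability Omega R) (E : set Omega) (A B : Omega -> R) : R :=
  cond_expect P E (fun w => A w * B w)
  - cond_expect P E A * cond_expect P E B.

Definition indistinguishable {d} {Omega : measurableType d} {R : realType}
  {T : Type} (P : probability Omega R) (X : Omega -> T) (Y : Omega -> R)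
  (F : set (T -> bool)) (alpha : R) (S : set T) : Prop :=
  forall f, F f ->
    `| cond_cov P (X @^-1` S) (fun w => (f (X w))%:R) Y | <= alpha.

Definition multicalibrated_partition {d} {Omega : measurableType d}
  {R : realType} {T : Type} (P : probability Omega R) (X : Omega -> T)
  (Y : Omega -> R) (F : set (T -> bool)) (alpha : R) (K : nat)
  (S : 'I_K -> set T) : Prop :=
  (forall x : T, exists k, S k x) /\
  (forall k l : 'I_K, k != l -> S k `&` S l = set0) /\
  (forall k, indistinguishable P X Y F alpha (S k)).

(* Y and Yh are conditionally independent given the (binary) random
   variable f(X) and the event {X in S}: for each value b of f(X), on the
   event E_b = {X in S, f(X) = b} the joint law factorizes,
   P(E_b, Y in A, Yh in B) P(E_b) = P(E_b, Y in A) P(E_b, Yh in B)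
   for all Borel A, B (the multiplicative form of
   P(Y in A, Yh in B | E_b) = P(Y in A | E_b) P(Yh in B | E_b)). *)
Definition cond_indep_given {d} {Omega : measurableType d} {R : realType}
  {T : Type} (P : probability Omega R) (X : Omega -> T) (Y Yh : Omega -> R)
  (f : T -> bool) (S : set T) : Prop :=
  forall (b : bool) (A B : set R), measurable A -> measurable B ->
    let E := X @^-1` S `&` [set w | f (X w) = b] in
    (P (E `&` Y @^-1` A `&` Yh @^-1` B) * P E
     = P (E `&` Y @^-1` A) * P (E `&` Yh @^-1` B))%E.

(* Main.v *)
Require Import Defs.
From HB Require Import structures.
From mathcomp Require Import all_boot all_order all_algebra.
From mathcomp Require Import all_classical all_reals all_analysis.
From mathcomp Require Import ring lra.
Import Order.TTheory GRing.Theory Num.Theory.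
Import numFieldNormedType.Exports.
Local Open Scope classical_set_scope.
Local Open Scope ring_scope.
Set Implicit Arguments. Unset Strict Implicit. Unset Printing Implicit Defensive.
Section Disc.
Context (R : realType).

Definition cell (n i : nat) : set R :=
  [set` Interval (BLeft (i%:R / n%:R)) (BLeft (i.+1%:R / n%:R))].

Lemma cell_meas n i : measurable (cell n i).
Proof. exact: measurable_itv. Qed.

Definition q (n : nat) (t : R) :=
  \sum_(i < n.+1) (i%:R / n%:R) * (\1_(cell n i) t : R).

Lemma in_co (a b t : R) : (t \in [set` Interval (BLeft a) (BLeft b)]) = (a <= t < b).
Proof.
by apply/idP/idP => [/set_mem /=|h]; [rewrite in_itv|apply: mem_set; rewrite /= in_itv].
Qed.

Lemma in_cell n i t : (t \in cell n i) = (i%:R / n%:R <= t < i.+1%:R / n%:R).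
Proof. exact: in_co.
Qed.

Lemma cellE n (i : nat) t : (0 < n)%N -> 0 <= t ->
  \1_(cell n i) t = (Num.truncn (t * n%:R) == i)%:R :> R.
Proof.
move=> n0 t0; have n0' : 0 < n%:R :> R by rewrite ltr0n.
rewrite indicE in_cell truncn_eq ?mulr_ge0 //.
by rewrite ler_pdivrMr // ltr_pdivlMr.
Qed.

Lemma q_bounds n t : (0 < n)%N -> 0 <= t <= 1 ->
  [/\ 0 <= q n t, q n t <= t & t - 1 / n%:R <= q n t].
Proof.
move=> n0 /andP[t0 t1]; have n0' : 0 < n%:R :> R by rewrite ltr0n.
set k := Num.truncn (t * n%:R).
have kn : (k < n.+1)%N.
  rewrite ltnS /k truncn_le_nat; apply: (le_lt_trans (y := n%:R)).
    by rewrite -{2}[n%:R]mul1r ler_wpM2r // ltW.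
  by rewrite ltr_nat.
have -> : q n t = k%:R / n%:R.
  rewrite /q (bigD1 (Ordinal kn)) //= cellE // eqxx mulr1 big1 ?addr0 //.
  move=> i /eqP ni; rewrite cellE //; case: eqP => [ki|]; last by rewrite mulr0.
  by exfalso; apply: ni; apply: val_inj => /=.
have := truncn_itv (mulr_ge0 t0 (ltW n0')); rewrite -/k => /andP[kl ku].
split.
- by rewrite divr_ge0.
- by rewrite ler_pdivrMr.
- by rewrite lerBlDr -mulrDl ler_pdivlMr // natr1 ltW.
Qed.

End Disc.
Section Infra.
Context d (Omega : measurableType d) (R : realType) (P : probability Omega R).

Definition good (g : Omega -> R) :=
  measurable_fun setT g /\ exists M : R, forall w, `|g w| <= M.

Lemma good_int D g : measurable D -> good g -> P.-integrable D (EFin \o g).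
Proof.
move=> mD [mg [M hM]]; apply: measurable_bounded_integrable => //.
- by rewrite (le_lt_trans (probability_le1 P mD)) // ltry.
- exact: measurable_funS mg.
- rewrite /bounded_near; near=> M0 => x _ /=; apply: le_trans (hM x) _.
  near: M0; apply: nbhs_pinfty_ge; exact: num_real.
Unshelve. all: by end_near.
Qed.

Lemma good_cst c : good (fun _ => c).
Proof. by split; [exact: measurable_cst | exists `|c|]. Qed.

Lemma good_indic A : measurable A -> good (\1_A).
Proof.
move=> mA; split; first exact: measurable_realfun.measurable_indic.
by exists 1 => w; rewrite indicE; case: (w \in A); rewrite ?normr1 ?normr0.
Qed.

Lemma goodD f g : good f -> good g -> good (fun w => f w + g w).
Proof.
move=> [mf [M hM]] [mg [N hN]]; split; first exact: measurable_realfun.measurable_funD.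
exists (M + N) => w; apply: le_trans (ler_normD _ _) _; exact: lerD.
Qed.

Lemma goodM f g : good f -> good g -> good (fun w => f w * g w).
Proof.
move=> [mf [M hM]] [mg [N hN]]; split; first exact: measurable_realfun.measurable_funM.
exists (M * N) => w; rewrite normrM; apply: ler_pM => //.
Qed.

Lemma good_sum n (g : 'I_n -> Omega -> R) : (forall i, good (g i)) ->
  good (fun w => \sum_(i < n) g i w).
Proof.
elim: n g => [|n IH] g hg.
  by under [fun w => _]funext do rewrite big_ord0; exact: good_cst.
under [fun w => _]funext do rewrite big_ord_recr /=.
apply: goodD; last exact: hg.
exact: (IH (fun i => g (widen_ord (leqnSn n) i))).
Qed.

Definition Ie D g := Rintegral P D g.

Lemma ID D f g : measurable D -> good f -> good g ->
  Ie D (fun w => f w + g w) = Ie D f + Ie D g.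
Proof. by move=> mD hf hg; apply: RintegralD => //; exact: good_int. Qed.

Lemma IZ D c g : measurable D -> good g -> Ie D (fun w => c * g w) = c * Ie D g.
Proof. by move=> mD hg; apply: RintegralZl => //; exact: good_int. Qed.

Lemma Isum D n (g : 'I_n -> Omega -> R) : measurable D -> (forall i, good (g i)) ->
  Ie D (fun w => \sum_(i < n) g i w) = \sum_(i < n) Ie D (g i).
Proof.
move=> mD; elim: n g => [|n IH] g hg.
  rewrite big_ord0; under [fun w => _]funext do rewrite big_ord0.
  by rewrite /Ie Rintegral_cst // mul0r.
under [fun w => _]funext do rewrite big_ord_recr /=.
have hs : good (fun w => \sum_(i < n) g (widen_ord (leqnSn n) i) w).
  by apply: good_sum => i; exact: hg.
rewrite big_ord_recr /= ID //.
by rewrite (IH (fun i => g (widen_ord (leqnSn n) i))).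
Qed.

Definition mue A := fine (P A).

Lemma I_indic D A : measurable D -> measurable A -> Ie D (\1_A) = mue (A `&` D).
Proof. by move=> mD mA; rewrite /Ie /Rintegral integral_indic. Qed.

Lemma I_cst D c : measurable D -> Ie D (fun _ => c) = c * mue D.
Proof. by move=> mD; rewrite /Ie Rintegral_cst. Qed.

Lemma le_I D f g : measurable D -> good f -> good g -> (forall w, f w <= g w) ->
  Ie D f <= Ie D g.
Proof. by move=> mD hf hg fg; apply: le_Rintegral => //; exact: good_int. Qed.

Lemma I_abs D f : measurable D -> good f -> `|Ie D f| <= Ie D (fun w => `|f w|).
Proof. by move=> mD hf; apply: le_normr_Rintegral => //; exact: good_int. Qed.

Lemma mu_ge0 A : 0 <= mue A.
Proof. exact/fine_ge0/measure_ge0. Qed.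

Lemma mu_le1 A : measurable A -> mue A <= 1.
Proof.
move=> mA; rewrite /mue -lee_fin fineK ?probability_le1 //.
exact: fin_num_measure.
Qed.

Lemma muM A B : measurable A -> measurable B -> fine (P A * P B)%E = mue A * mue B.
Proof. by move=> mA mB; rewrite fineM //; exact: fin_num_measure. Qed.

Lemma muU A B : measurable A -> measurable B -> A `&` B = set0 ->
  mue (A `|` B) = mue A + mue B.
Proof.
by move=> mA mB AB; rewrite /mue measureU // fineD //; exact: fin_num_measure.
Qed.

End Infra.

Lemma small0 (R : realType) (x c : R) :
  (forall n, (0 < n)%N -> `|x| <= c / n%:R) -> x = 0.
Proof.
move=> h; apply/eqP; apply/negPn/negP => x0.
have xp : 0 < `|x| by rewrite normr_gt0.
set n := (Num.truncn (c / `|x|)).+1.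
have n0' : 0 < n%:R :> R by rewrite ltr0n.
have := h n isT; rewrite ler_pdivlMr // => hc.
have : c / `|x| < n%:R by rewrite /n truncnS_gt.
rewrite ltr_pdivrMr // => hc'.
by move: (le_lt_trans hc hc'); rewrite mulrC ltxx.
Qed.


Section Indep.
Context d (Omega : measurableType d) (R : realType) (P : probability Omega R).
Local Notation Ie := (Ie P).
Local Notation mue := (mue P).

Definition Yq n (Y : Omega -> R) w :=
  \sum_(i < n.+1) (i%:R / n%:R) * (\1_(Y @^-1` @cell R n i) w : R).

Lemma YqE n Y w : Yq n Y w = q n (Y w).
Proof. by []. Qed.

Lemma pre_meas (Y : Omega -> R) A : measurable_fun setT Y -> measurable A ->
  measurable (Y @^-1` A).
Proof. by move=> mY mA; rewrite -[Y @^-1` A]setTI; exact: mY. Qed.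

Lemma good_Yq n Y : measurable_fun setT Y -> good (Yq n Y).
Proof.
move=> mY; rewrite /Yq; apply: good_sum => i. apply: goodM; first exact: good_cst.
have h := good_indic R (pre_meas mY (@cell_meas R n i)); apply: h.
Qed.


Lemma IYq E n Y : measurable E -> measurable_fun setT Y ->
  Ie E (Yq n Y) = \sum_(i < n.+1) (i%:R / n%:R) * mue (E `&` Y @^-1` @cell R n i).
Proof.
move=> mE mY; rewrite /Yq. rewrite Isum //; last first.
  move=> i; apply: goodM; first exact: good_cst.
  have h := good_indic R (pre_meas mY (@cell_meas R n i)). exact h.
apply: eq_bigr => i _; have h := good_indic R (pre_meas mY (@cell_meas R n i)).
rewrite IZ //.
have mA := pre_meas mY (@cell_meas R n i).
rewrite I_indic; [|exact: mE|exact: mA].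
by rewrite setIC.
Qed.

Lemma goodB (f g : Omega -> R) : good f -> good g -> good (fun w => f w - g w).
Proof.
move=> [mf [M hM]] [mg [N hN]]; split; first exact: measurable_realfun.measurable_funB.
exists (M + N) => w; apply: le_trans (ler_normB _ _) _; exact: lerD.
Qed.

Lemma IB D (f g : Omega -> R) : measurable D -> good f -> good g ->
  Ie D (fun w => f w - g w) = Ie D f - Ie D g.
Proof.
move=> mD hf hg; rewrite /Ie; apply: RintegralB; first exact: mD.
  have h := good_int P mD hf; exact h.
have h := good_int P mD hg; exact h.
Qed.

Lemma I_bound D (f : Omega -> R) c : measurable D -> good f ->
  (forall w, `|f w| <= c) -> `|Ie D f| <= c * mue D.
Proof.
move=> mD gf hc; rewrite ler_norml; apply/andP; split.
  have := le_I P mD (good_cst Omega (- c)) gf.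
  rewrite (I_cst P _ mD) mulNr; apply => w.
  by move: (hc w); rewrite ler_norml => /andP[].
have := le_I P mD gf (good_cst Omega c).
rewrite (I_cst P _ mD); apply => w.
by move: (hc w); rewrite ler_norml => /andP[].
Qed.

Lemma Iprod (E : set Omega) n (Y Yh : Omega -> R) : measurable E -> measurable_fun setT Y ->
  measurable_fun setT Yh ->
  Ie E (fun w => Yq n Y w * Yq n Yh w) =
  \sum_(i < n.+1) \sum_(j < n.+1) (i%:R / n%:R * (j%:R / n%:R)) *
     mue ((Y @^-1` @cell R n i `&` Yh @^-1` @cell R n j) `&` E).
Proof.
move=> mE mY mYh.
have mIJ (i j : nat) : measurable (Y @^-1` @cell R n i `&` Yh @^-1` @cell R n j).
  exact: measurableI (pre_meas mY (@cell_meas R n i)) (pre_meas mYh (@cell_meas R n j)).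
have gI (i j : nat) : good (\1_(Y @^-1` @cell R n i `&` Yh @^-1` @cell R n j) : Omega -> R).
  have h := good_indic R (mIJ i j); exact h.
have gIJ (i j : nat) c : good (fun w => c * (\1_(Y @^-1` @cell R n i `&` Yh @^-1` @cell R n j) w : R)).
  by apply: goodM; [exact: good_cst|exact: gI].
have pe : (fun w => Yq n Y w * Yq n Yh w) = (fun w => \sum_(i < n.+1) \sum_(j < n.+1)
    (i%:R / n%:R * (j%:R / n%:R)) * (\1_(Y @^-1` @cell R n i `&` Yh @^-1` @cell R n j) w : R)).
  apply: funext => w; rewrite /Yq big_distrl; apply: eq_bigr => i _ /=.
  by rewrite big_distrr; apply: eq_bigr => j _ /=; rewrite indicI /= mulrACA.
rewrite pe (Isum P mE); last first.
  by move=> i; apply: good_sum => j; exact: gIJ.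
apply: eq_bigr => i _; rewrite (Isum P mE); last by move=> j; exact: gIJ.
apply: eq_bigr => j _; rewrite (IZ P _ mE (gI i j)).
by rewrite (I_indic P mE (mIJ i j)).
Qed.

Lemma indep_int (E : set Omega) (Y Yh : Omega -> R) : measurable E -> measurable_fun setT Y ->
  measurable_fun setT Yh ->
  (forall w, 0 <= Y w <= 1) -> (forall w, 0 <= Yh w <= 1) ->
  (forall A B, measurable A -> measurable B ->
    (P (E `&` Y @^-1` A `&` Yh @^-1` B) * P E =
     P (E `&` Y @^-1` A) * P (E `&` Yh @^-1` B))%E) ->
  Ie E (fun w => Y w * Yh w) * mue E = Ie E Y * Ie E Yh.
Proof.
move=> mE mY mYh hY hYh H.
have ex n : Ie E (fun w => Yq n Y w * Yq n Yh w) * mue E = Ie E (Yq n Y) * Ie E (Yq n Yh).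
  rewrite (Iprod n mE mY mYh) (IYq n mE mY) (IYq n mE mYh) big_distrl [RHS]big_distrl.
  apply: eq_bigr => i _ /=.
  rewrite big_distrl big_distrr; apply: eq_bigr => j _ /=.
  have mA := pre_meas mY (@cell_meas R n i).
  have mB := pre_meas mYh (@cell_meas R n j).
  have mEA := measurableI _ _ mE mA.
  have mEB := measurableI _ _ mE mB.
  have mEAB := measurableI _ _ mEA mB.
  have hij : mue (E `&` Y @^-1` @cell R n i `&` Yh @^-1` @cell R n j) * mue E =
      mue (E `&` Y @^-1` @cell R n i) * mue (E `&` Yh @^-1` @cell R n j).
    rewrite -(muM P mEAB mE) -(muM P mEA mEB).
    by rewrite (H _ _ (@cell_meas R n i) (@cell_meas R n j)).
  by rewrite (setIC _ E) setIA -[LHS]mulrA hij mulrACA.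
have gY : good Y.
  split; first exact: mY.
  by exists 1 => w; have /andP[Y0 Y1] := hY w; rewrite ger0_norm.
have gYh : good Yh.
  split; first exact: mYh.
  by exists 1 => w; have /andP[Y0 Y1] := hYh w; rewrite ger0_norm.
have m0 : 0 <= mue E by exact: mu_ge0.
have m1 : mue E <= 1 by have h := mu_le1 P mE; exact h.
have I0 f : good f -> (forall w, 0 <= f w <= 1) -> 0 <= Ie E f <= mue E.
  move=> gf hf; apply/andP; split.
    have := le_I P mE (good_cst Omega 0) gf.
    rewrite (I_cst P _ mE) mul0r; apply => w.
    by case/andP: (hf w).
  have := le_I P mE gf (good_cst Omega 1).
  rewrite (I_cst P _ mE) mul1r; apply => w.
  by case/andP: (hf w).
have key n : (0 < n)%N ->
    `|Ie E (fun w => Y w * Yh w) * mue E - Ie E Y * Ie E Yh| <= 4 / n%:R.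
  move=> n0; set e := n%:R^-1.
  have e0 : 0 <= e by rewrite invr_ge0.
  have hq t : 0 <= t <= 1 -> [/\ 0 <= q n t, q n t <= t & t - e <= q n t].
    by rewrite /e -div1r; exact: q_bounds.
  have ga := good_Yq n mY; have gb := good_Yq n mYh.
  have exn := ex n.
  set a := Yq n Y in ga exn *; set b := Yq n Yh in gb exn *.
  have ha w : [/\ 0 <= a w, a w <= Y w & Y w - e <= a w] := hq _ (hY w).
  have hb w : [/\ 0 <= b w, b w <= Yh w & Yh w - e <= b w] := hq _ (hYh w).
  have /andP[ya0 yam] : 0 <= Ie E a <= mue E.
    apply: I0; first exact: ga.
    move=> w; have [? ? ?] := ha w; have /andP[? ?] := hY w.
    by apply/andP; split => //; lra.
  have /andP[h0 hm] : 0 <= Ie E Yh <= mue E by exact: I0.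
  have Dz : `|Ie E (fun w => Y w * Yh w) - Ie E (fun w => a w * b w)| <= 2 * e * mue E.
    rewrite -(IB mE (goodM gY gYh) (goodM ga gb)).
    apply: (I_bound mE (goodB (goodM gY gYh) (goodM ga gb))) => w.
    have [? ? ?] := ha w; have [? ? ?] := hb w.
    have /andP[? ?] := hY w; have /andP[? ?] := hYh w.
    by rewrite ler_norml; apply/andP; split; nra.
  have Dy : `|Ie E Y - Ie E a| <= e * mue E.
    rewrite -(IB mE gY ga).
    apply: (I_bound mE (goodB gY ga)) => w.
    have [? ? ?] := ha w.
    by rewrite ler_norml; apply/andP; split; lra.
  have Dh : `|Ie E Yh - Ie E b| <= e * mue E.
    rewrite -(IB mE gYh gb).
    apply: (I_bound mE (goodB gYh gb)) => w.
    have [? ? ?] := hb w.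
    by rewrite ler_norml; apply/andP; split; lra.
  move: Dz Dy Dh exn ya0 yam h0 hm m0 m1.
  set z := Ie E (fun w => Y w * Yh w).
  set zq := Ie E (fun w => a w * b w).
  set y := Ie E Y; set ya := Ie E a.
  set h := Ie E Yh; set hb' := Ie E b.
  set m := mue E.
  move=> Dz Dy Dh exn ya0 yam h0 hm m0 m1.
  have -> : z * m - y * h = (z - zq) * m + ya * (hb' - h) + h * (ya - y).
    rewrite (_ : (z - zq) * m + ya * (hb' - h) + h * (ya - y) =
                 z * m - y * h + (ya * hb' - zq * m)); last by ring.
    by rewrite exn subrr addr0.
  have t1 : `|(z - zq) * m| <= 2 * e.
    rewrite normrM (ger0_norm m0).
    have := normr_ge0 (z - zq); move: Dz; set u := `|z - zq|; move=> Dz u0.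
    nra.
  have t2 : `|ya * (hb' - h)| <= e.
    rewrite normrM (ger0_norm ya0).
    have := normr_ge0 (hb' - h); rewrite distrC in Dh.
    move: Dh; set u := `|hb' - h|; move=> Dh u0.
    nra.
  have t3 : `|h * (ya - y)| <= e.
    rewrite normrM (ger0_norm h0).
    have := normr_ge0 (ya - y); rewrite distrC in Dy.
    move: Dy; set u := `|ya - y|; move=> Dy u0.
    nra.
  apply: le_trans (ler_normD _ _) _.
  apply: le_trans (lerD (ler_normD _ _) (lexx _)) _.
  have -> : 4 / n%:R = 2 * e + e + e by rewrite /e; ring.
  by apply: lerD => //; apply: lerD.
apply/eqP; rewrite -subr_eq0; apply/eqP; exact: small0 key.
Qed.


Lemma I_split (A B : set Omega) (g : Omega -> R) : measurable A -> measurable B ->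
  A `&` B = set0 -> good g -> Ie (A `|` B) g = Ie A g + Ie B g.
Proof.
move=> mA mB AB hg; rewrite /Ie; apply: Rintegral_setU.
- exact: mA.
- exact: mB.
- have h := good_int P (measurableU _ _ mA mB) hg; exact h.
- exact/disj_set2P.
Qed.

Lemma I_eq (D : set Omega) (f g : Omega -> R) : {in D, f =1 g} -> Ie D f = Ie D g.
Proof. by move=> fg; rewrite /Ie; apply: eq_Rintegral. Qed.

Lemma I01 (D : set Omega) (g : Omega -> R) : measurable D -> good g ->
  (forall w, 0 <= g w <= 1) -> 0 <= Ie D g <= mue D.
Proof.
move=> mD gf hf; apply/andP; split.
  have := le_I P mD (good_cst Omega 0) gf.
  rewrite (I_cst P _ mD) mul0r; apply => w.
  by case/andP: (hf w).
have := le_I P mD gf (good_cst Omega 1).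
rewrite (I_cst P _ mD) mul1r; apply => w.
by case/andP: (hf w).
Qed.

End Indep.

Lemma alg (R : realType) (m0 m1 y0 y1 h0 h1 z0 z1 alpha : R) :
  0 <= m0 -> 0 <= m1 -> 0 < m0 + m1 ->
  0 <= y0 <= m0 -> 0 <= y1 <= m1 -> 0 <= h0 <= m0 -> 0 <= h1 <= m1 ->
  0 <= z0 <= m0 -> 0 <= z1 <= m1 ->
  z0 * m0 = y0 * h0 -> z1 * m1 = y1 * h1 -> 0 <= alpha ->
  `|y1 / (m0 + m1) - m1 / (m0 + m1) * ((y0 + y1) / (m0 + m1))| <= alpha ->
  `|(z0 + z1) / (m0 + m1) - (y0 + y1) / (m0 + m1) * ((h0 + h1) / (m0 + m1))|
    <= Num.sqrt (alpha / 2).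
Proof.
move=> m0p m1p mp /andP[y0a y0b] /andP[y1a y1b] /andP[h0a h0b] /andP[h1a h1b]
  /andP[z0a z0b] /andP[z1a z1b] hz0 hz1 a0 hc.
set m := m0 + m1 in mp hc *.
have mn : m != 0 by rewrite gt_eqF.
set D := m * (z0 + z1) - (y0 + y1) * (h0 + h1).
set cM := m0 * y1 - m1 * y0.
have m2 : 0 < m ^+ 2 by rewrite exprn_gt0.
have CE : (z0 + z1) / m - (y0 + y1) / m * ((h0 + h1) / m) = D / m ^+ 2.
  by rewrite /D; field.
have cE : y1 / m - m1 / m * ((y0 + y1) / m) = cM / m ^+ 2.
  by rewrite /cM /m; field; rewrite -/m.
rewrite CE; rewrite cE in hc.
have [hD1 hD2] : `|D| <= `|cM| /\ 4 * `|D| <= m ^+ 2.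
  have [m00|m0n] := eqVneq m0 0.
    have y00 : y0 = 0 by lra.
    have h00 : h0 = 0 by lra.
    have z00 : z0 = 0 by lra.
    have -> : D = 0 by rewrite /D /m m00 y00 h00 z00 !(add0r, addr0) mulrC hz1 subrr.
    by rewrite normr0 normr_ge0 mulr0 ltW.
  have [m10|m1n] := eqVneq m1 0.
    have y10 : y1 = 0 by lra.
    have h10 : h1 = 0 by lra.
    have z10 : z1 = 0 by lra.
    have -> : D = 0 by rewrite /D /m m10 y10 h10 z10 !(add0r, addr0) mulrC hz0 subrr.
    by rewrite normr0 normr_ge0 mulr0 ltW.
  have mm : 0 < m0 * m1 by rewrite mulr_gt0 // lt0r ?m0n ?m1n.
  have key : m0 * m1 * D = cM * (m0 * h1 - m1 * h0).
    have -> : m0 * m1 * D = m * m1 * (z0 * m0) + m * m0 * (z1 * m1)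
                          - m0 * m1 * ((y0 + y1) * (h0 + h1)) by rewrite /D; ring.
    by rewrite hz0 hz1 /cM /m; ring.
  have b1 : `|m0 * h1 - m1 * h0| <= m0 * m1.
    by rewrite ler_norml; apply/andP; split; nra.
  have b2 : `|cM| <= m0 * m1.
    by rewrite ler_norml /cM; apply/andP; split; nra.
  have kD : `|D| * (m0 * m1) = `|cM| * `|m0 * h1 - m1 * h0|.
    by rewrite -normrM -key mulrC normrM (ger0_norm (ltW mm)).
  have nD := normr_ge0 D; have ncM := normr_ge0 cM.
  have nX := normr_ge0 (m0 * h1 - m1 * h0).
  split.
    have : `|D| * (m0 * m1) <= `|cM| * (m0 * m1).
      by rewrite kD; apply: ler_wpM2l.
    by rewrite ler_pM2r.
  have : `|D| * (m0 * m1) <= (m0 * m1) * (m0 * m1).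
    by rewrite kD; apply: ler_pM.
  rewrite ler_pM2r // => h.
  have sq := sqr_ge0 (m0 - m1); rewrite expr2 in sq.
  rewrite /m expr2; nra.
have nE x : `|x / m ^+ 2| = `|x| / m ^+ 2.
  by rewrite normrM normfV (ger0_norm (ltW m2)).
have hC1 : `|D / m ^+ 2| <= alpha.
  apply: le_trans hc; rewrite !nE.
  by rewrite ler_pM2r // invr_gt0.
have hC2 : 4 * `|D / m ^+ 2| <= 1.
  by rewrite nE mulrA ler_pdivrMr // mul1r.
rewrite -sqrtr_sqr; apply: ler_wsqrtr.
rewrite -real_normK ?num_real //.
have := normr_ge0 (D / m ^+ 2); move: hC1 hC2; set u := `|D / m ^+ 2|.
move=> hC1 hC2 u0; rewrite expr2; nra.
Qed.

Unset Implicit Arguments.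
Set Strict Implicit.

Theorem theorem2 (d : measure_display) (Omega : measurableType d)
  (R : realType) (P : probability Omega R)
  (dT : measure_display) (T : measurableType dT)
  (X : Omega -> T) (Y Yh : Omega -> R)
  (hX : measurable_fun setT X) (hY : measurable_fun setT Y)
  (hYh : measurable_fun setT Yh)
  (hY01 : forall w, 0 <= Y w <= 1) (hYh01 : forall w, 0 <= Yh w <= 1)
  (F : set (T -> bool))
  (hF : forall f, F f -> measurable [set x | f x])
  (alpha : R) (halpha : 0 <= alpha)
  (K : nat) (S : 'I_K -> set T)
  (hSm : forall k, measurable (S k))
  (hSpos : forall k, (0 < P (X @^-1` S k))%E)
  (hpart : multicalibrated_partition P X Y F alpha S)
  (hci : forall k, exists2 f, F f & cond_indep_given P X Y Yh f (S k)) :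
  forall k : 'I_K, `| cond_cov P (X @^-1` S k) Y Yh | <= Num.sqrt (alpha / 2).

Proof.
move=> k.
have [_ [_ hind_all]] := hpart.
case: (hci k) => f Ff hci_k.
have hc := hind_all k f Ff.
have pre (B : set T) : measurable B -> measurable (X @^-1` B).
  by move=> mB; rewrite -[X @^-1` B]setTI; exact: hX.
set E := X @^-1` S k in hc *.
have mE : measurable E := pre _ (hSm k).
set T1 := [set w | f (X w) = true].
have mT1 : measurable T1 := pre _ (hF f Ff).
set T0 := [set w | f (X w) = false].
have T0E : T0 = ~` T1.
  by apply/seteqP; split => w /=; rewrite /T0 /T1 /=; case: (f (X w)).
have mT0 : measurable T0 by rewrite T0E; exact: measurableC.
set E1 := E `&` T1; set E0 := E `&` T0.
have mE1 : measurable E1 := measurableI _ _ mE mT1.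
have mE0 : measurable E0 := measurableI _ _ mE mT0.
have EU : E = E0 `|` E1 by rewrite /E0 /E1 -setIUr T0E setvU setIT.
have E01 : E0 `&` E1 = set0.
  apply/seteqP; split => // w [[_ h0] [_ h1]].
  by move: h0 h1; rewrite /T0 /T1 /= => ->.
have gY : good Y.
  split; first exact: hY.
  by exists 1 => w; have /andP[Y0 Y1] := hY01 w; rewrite ger0_norm.
have gYh : good Yh.
  split; first exact: hYh.
  by exists 1 => w; have /andP[Y0 Y1] := hYh01 w; rewrite ger0_norm.
have gYY := goodM gY gYh.
have YY01 w : 0 <= Y w * Yh w <= 1.
  have /andP[? ?] := hY01 w; have /andP[? ?] := hYh01 w.
  by rewrite mulr_ge0 //= mulr_ile1.
have fXE : (fun w => (f (X w))%:R : R) = \1_T1.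
  apply/funext => w; rewrite indicE; case h: (f (X w)).
  - by rewrite mem_set.
  - by rewrite memNset // /T1 /= h.
have gfX : good (fun w => (f (X w))%:R : R).
  by rewrite fXE; have h := good_indic R mT1; exact h.
have gfXY := goodM gfX gY.
have sp g : good g -> Ie P E g = Ie P E0 g + Ie P E1 g.
  by move=> hg; rewrite EU; exact: I_split.
have muE : mue P E = mue P E0 + mue P E1.
  by rewrite EU; exact: muU.
have i1 : Ie P E1 (fun w => Y w * Yh w) * mue P E1 = Ie P E1 Y * Ie P E1 Yh.
  apply: indep_int; [exact: mE1|exact: hY|exact: hYh|exact: hY01|exact: hYh01|].
  move=> A B mA mB; have h := hci_k true A B mA mB; exact h.
have i0 : Ie P E0 (fun w => Y w * Yh w) * mue P E0 = Ie P E0 Y * Ie P E0 Yh.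
  apply: indep_int; [exact: mE0|exact: hY|exact: hYh|exact: hY01|exact: hYh01|].
  move=> A B mA mB; have h := hci_k false A B mA mB; exact h.
have fXY0 : Ie P E0 (fun w => (f (X w))%:R * Y w) = 0.
  have -> : Ie P E0 (fun w => (f (X w))%:R * Y w) = Ie P E0 (fun _ => 0).
    by apply: I_eq => w /set_mem [_ /= h0]; rewrite h0 /= mulr0n mul0r.
  by rewrite (I_cst P _ mE0) mul0r.
have fXY1 : Ie P E1 (fun w => (f (X w))%:R * Y w) = Ie P E1 Y.
  apply: I_eq => w /set_mem [_ /= h1].
  by rewrite h1 /= mulr1n mul1r.
have fX0 : Ie P E0 (fun w => (f (X w))%:R) = 0.
  have -> : Ie P E0 (fun w => (f (X w))%:R) = Ie P E0 (fun _ => 0).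
    by apply: I_eq => w /set_mem [_ /= h0]; rewrite h0 /= mulr0n.
  by rewrite (I_cst P _ mE0) mul0r.
have fX1 : Ie P E1 (fun w => (f (X w))%:R) = mue P E1.
  have -> : Ie P E1 (fun w => (f (X w))%:R) = Ie P E1 (fun _ => 1).
    by apply: I_eq => w /set_mem [_ /= h1]; rewrite h1 /= mulr1n.
  by rewrite (I_cst P _ mE1) mul1r.
have covE : cond_cov P E Y Yh =
    Ie P E (fun w => Y w * Yh w) / mue P E -
    Ie P E Y / mue P E * (Ie P E Yh / mue P E) by [].
have covF : cond_cov P E (fun w => (f (X w))%:R) Y =
    Ie P E (fun w => (f (X w))%:R * Y w) / mue P E -
    Ie P E (fun w => (f (X w))%:R) / mue P E * (Ie P E Y / mue P E) by [].
rewrite covF (sp _ gfXY) (sp _ gfX) (sp _ gY) fXY0 fX0 fXY1 fX1 !add0r muE in hc.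
rewrite covE (sp _ gYY) (sp _ gY) (sp _ gYh) muE.
have mpos : 0 < mue P E0 + mue P E1.
  rewrite -muE /mue fine_gt0 // hSpos /=.
  have := fin_num_measure P _ mE; rewrite ge0_fin_numE //; exact: measure_ge0.
have [? ?] : 0 <= mue P E0 /\ 0 <= mue P E1 by split; exact: mu_ge0.
apply: alg => //.
- exact: I01.
- exact: I01.
- exact: I01.
- exact: I01.
- exact: I01.
- exact: I01.
Qed.
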